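(* Let $t_1, t_2 \in \mathcal{L}_r$ with $t_1 =_{\mathcal{L}} t_2$. Then for all finite $E \subseteq \mathcal{X}$, $x \in \mathcal{X}$, $S \in \mathbb{N}$: $A(E, x, S)$ is one of the sublevels of $t_1$ if and only if $A(E, x, S)$ is one of the sublevels of $t_2$.
   Context: $\mathcal{X}$ is a countable set of variables; a valuation is $\sigma\colon\mathcal{X}\to\mathbb{N}$. For finite $E\subseteq\mathcal{X}$, $x\in\mathcal{X}$, $S\in\mathbb{N}$, the sublevels $A(E,x,S)$ and $B(E,S)$ have values $[A(E,x,S)]_\sigma = 0$ if some $y\in E$ has $\sigma(y)=0$, and $\sigma(x)+S$ otherwise; $[B(E,S)]_\sigma=0$ if some $y\in E$ has $\sigma(y)=0$, and $S$ otherwise. $\mathcal{L}_s$ is the set of sublevels $A(E,x,S)$ with $x\in E$ and $B(E,S)$ with $S>0$. $t_1\leqslant_{\mathcal{L}} t_2$ (resp. $t_1 =_{\mathcal{L}} t_2$) means $[t_1]_\sigma\le[t_2]_\sigma$ (resp. $=$) for every valuation $\sigma$; $\max$ of a finite family is evaluated pointwise (empty max has value $0$). Two sublevels $u,v$ are incomparable if neither $u\leqslant_{\mathcal{L}} v$ nor $v\leqslant_{\mathcal{L}} u$. A minimal representation is a formal expression $\max(u_1,\ldots,u_n)$ where $\{u_1,\ldots,u_n\}$ is a finite set of elements of $\mathcal{L}_s$ that are pairwise incomparable ($u_i$ and $u_j$ incomparable for $i\ne j$); $\mathcal{L}_r$ is the set of minimal representations, and the $u_i$ are called its sublevels. *)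

(* Defs.v *)
From HB Require Import structures.
From mathcomp Require Import all_boot.
From mathcomp Require Import finmap.
From Stdlib Require List.
Set Implicit Arguments. Unset Strict Implicit. Unset Printing Implicit Defensive.

Local Open Scope fset_scope.

(* Variables: the countable(-ly infinite) set X is modelled by nat.
   Valuations: nat -> nat. *)
Definition valuation := nat -> nat.

Inductive sublevel : Type :=
| SA : {fset nat} -> nat -> nat -> sublevel
| SB : {fset nat} -> nat -> sublevel.

Definition some_zero (E : {fset nat}) (sigma : valuation) : bool :=
  [exists y : E, sigma (val y) == 0%N].

Definition eval_sub (u : sublevel) (sigma : valuation) : nat :=
  match u with
  | SA E x s => if some_zero E sigma then 0%N else (sigma x + s)%N
  | SB E s => if some_zero E sigma then 0%N else s
  end.

Definition sub_le (u v : sublevel) : Prop :=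
  forall sigma : valuation, (eval_sub u sigma <= eval_sub v sigma)%N.

Definition incomparable (u v : sublevel) : Prop :=
  ~ sub_le u v /\ ~ sub_le v u.

Definition in_Ls (u : sublevel) : Prop :=
  match u with
  | SA E x _ => x \in E
  | SB E s => (0 < s)%N
  end.

(* A formal max expression, given by its (finite) list of sublevels. *)
Definition eval_max (t : list sublevel) (sigma : valuation) : nat :=
  foldr (fun u acc => maxn (eval_sub u sigma) acc) 0%N t.

Definition eq_L (t1 t2 : list sublevel) : Prop :=
  forall sigma : valuation, eval_max t1 sigma = eval_max t2 sigma.

Definition in_Lr (t : list sublevel) : Prop :=
  List.NoDup t /\
  (forall u, List.In u t -> in_Ls u) /\
  (forall u v, List.In u t -> List.In v t -> u <> v -> incomparable u v).

(* Main.v *)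
Require Import Defs.
From mathcomp Require Import all_boot.
From mathcomp Require Import finmap.
From Stdlib Require List.
From mathcomp Require Import zify.
Set Implicit Arguments. Unset Strict Implicit. Unset Printing Implicit Defensive.
Local Open Scope fset_scope.

Lemma some_zeroP (E : {fset nat}) (s : valuation) :
  reflect (exists y, y \in E /\ s y = 0%N) (some_zero E s).
Proof.
apply: (iffP existsP).
  by case=> [[y yE]] /= /eqP H; exists y.
by case=> y [yE H]; exists [` yE]; apply/eqP.
Qed.

Lemma le_eval_max t u s : List.In u t -> (eval_sub u s <= eval_max t s)%N.
Proof.
elim: t => //= a t IH [->|H]; first exact: leq_maxl.
exact: leq_trans (IH H) (leq_maxr _ _).
Qed.

Lemma eval_max_le t s m : (forall u, List.In u t -> eval_sub u s <= m)%N ->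
  (eval_max t s <= m)%N.
Proof.
elim: t => //= a t IH H; rewrite geq_max H /=; last by left.
by apply: IH => u Hu; apply: H; right.
Qed.

Lemma eval_max_ex t s : (0 < eval_max t s)%N ->
  exists u, List.In u t /\ eval_sub u s = eval_max t s.
Proof.
elim: t => //= a t IH H.
case: (leqP (eval_max t s) (eval_sub a s)) => h.
  by exists a; split; [left|lia].
have [u [Hu Hv]] := IH (leq_ltn_trans (leq0n _) h).
by exists u; split; [right|rewrite Hv; lia].
Qed.

Definition cst u := match u with SA _ _ s => s | SB _ s => s end.

Definition Kb t := foldr (fun u acc => maxn (cst u) acc) 0%N t.

Lemma Kb_le t u : List.In u t -> (cst u <= Kb t)%N.
Proof.
elim: t => //= a t IH [->|H]; first exact: leq_maxl.
exact: leq_trans (IH H) (leq_maxr _ _).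
Qed.

Lemma sub_le_A (E E' : {fset nat}) x S S' :
  E' `<=` E -> (S <= S')%N -> sub_le (SA E x S) (SA E' x S').
Proof.
move=> sub le tau /=.
case: ifP => // /negbT nz.
have -> : some_zero E' tau = false.
  apply/negbTE/negP => /some_zeroP [y [yE h]].
  by move/negP: nz; apply; apply/some_zeroP; exists y; split => //; apply: (fsubsetP sub).
by rewrite leq_add2l.
Qed.

Definition sig (E : {fset nat}) x N : valuation :=
  fun y => if y == x then N else if y \in E then 1%N else 0%N.

Lemma sig_sub (E E' : {fset nat}) x N : x \in E ->
  ~~ some_zero E' (sig E x N) -> E' `<=` E.
Proof.
move=> xE nz; apply/fsubsetP => y yE'.
case: (boolP (y \in E)) => // yNE.
move/negP: nz; case; apply/some_zeroP; exists y; split => //.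
rewrite /sig; case: eqP => [e|_]; first by rewrite e xE in yNE.
by rewrite (negbTE yNE).
Qed.

Lemma sig_le (E : {fset nat}) x N y : y != x -> (sig E x N y <= 1)%N.
Proof. by rewrite /sig => /negbTE ->; case: (y \in E). Qed.

Lemma key t1 t2 K (E : {fset nat}) x S :
  in_Lr t1 -> eq_L t1 t2 ->
  (forall u, List.In u t1 \/ List.In u t2 -> cst u <= K)%N ->
  List.In (SA E x S) t1 ->
  exists E2, E2 `<=` E /\ List.In (SA E2 x S) t2.
Proof.
move=> [_ [Ls Inc]] Heq HK Hin.
have xE : x \in E by exact: (Ls _ Hin).
pose N := (K + 2)%N.
pose s := sig E x N.
have snz : ~~ some_zero E s.
  apply/negP => /some_zeroP [y [yE]]; rewrite /s /sig.
  by case: eqP => _; [|rewrite yE]; rewrite /N; lia.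
have valA : eval_sub (SA E x S) s = (N + S)%N.
  by rewrite /= (negbTE snz) /s /sig eqxx.
have m1 : eval_max t1 s = (N + S)%N.
  apply/eqP; rewrite eqn_leq; apply/andP; split; last by rewrite -valA le_eval_max.
  apply: eval_max_le => u Hu.
  have Ku := HK u (or_introl Hu).
  case: u Hu Ku => [E' x' s'|E' s'] Hu Ku /=; last first.
    by case: ifP => _ //; rewrite /= in Ku; lia.
  case: ifP => // /negbT nz.
  have sub := sig_sub xE nz.
  case: (eqVneq x' x) => [ex|nx].
    rewrite ex /s /sig eqxx leq_add2l leqNgt; apply/negP => lt.
    have ne : SA E x S <> SA E' x' s' by move=> [_ _ e]; rewrite e ltnn in lt.
    have [nle _] := Inc _ _ Hin Hu ne.
    by apply: nle; rewrite ex; apply: sub_le_A => //; apply: ltnW.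
  have := sig_le E N nx; rewrite /= in Ku; rewrite /s /N; lia.
have m2 : eval_max t2 s = (N + S)%N by rewrite -Heq.
have pos : (0 < eval_max t2 s)%N by rewrite m2 /N; lia.
have [v [Hv Ev]] := eval_max_ex pos.
rewrite m2 in Ev.
have Kv := HK v (or_intror Hv).
case: v Hv Ev Kv => [E2 x2 s2|E2 s2] Hv /= Ev Kv; last first.
  by move: Ev; case: ifP => _; rewrite /N; lia.
move: Ev; case: ifP => [_|/negbT nz]; first by rewrite /N; lia.
have sub := sig_sub xE nz.
case: (eqVneq x2 x) => [ex|nx]; last first.
  by have := sig_le E N nx; rewrite /s /N; lia.
rewrite ex /s /sig eqxx => /eqP; rewrite eqn_add2l => /eqP es.
by exists E2; split => //; rewrite -es -ex.
Qed.

Lemma dir t1 t2 (E : {fset nat}) x S :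
  in_Lr t1 -> in_Lr t2 -> eq_L t1 t2 ->
  List.In (SA E x S) t1 -> List.In (SA E x S) t2.
Proof.
move=> L1 L2 Heq Hin.
pose K := (Kb t1 + Kb t2)%N.
have HK : forall u, List.In u t1 \/ List.In u t2 -> (cst u <= K)%N.
  move=> u [H|H]; have := Kb_le H; rewrite /K; lia.
have HK' : forall u, List.In u t2 \/ List.In u t1 -> (cst u <= K)%N.
  by move=> u [H|H]; apply: HK; [right|left].
have [E2 [s2 H2]] := key L1 Heq HK Hin.
have Heq' : eq_L t2 t1 by move=> s; rewrite Heq.
have [E3 [s3 H3]] := key L2 Heq' HK' H2.
have E3E : E3 = E.
  apply/eqP; apply: contraT => ne.
  have [_ [_ Inc]] := L1.
  have neq : SA E x S <> SA E3 x S by move=> [e]; rewrite e eqxx in ne.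
  have [h _] := Inc _ _ Hin H3 neq.
  by case: (h (sub_le_A x (fsubset_trans s3 s2) (leqnn S))).
have s4 : E `<=` E2 by case: E3E => <-.
have -> : E = E2 by apply/eqP; rewrite eqEfsubset s4 s2.
exact: H2.
Qed.

Theorem proposition31 (t1 t2 : list sublevel) :
  in_Lr t1 -> in_Lr t2 -> eq_L t1 t2 ->
  forall (E : {fset nat}) (x s : nat),
    List.In (SA E x s) t1 <-> List.In (SA E x s) t2.
Proof.
move=> L1 L2 Heq E x s; split; first exact: dir.
by apply: dir => // sg; rewrite Heq.
Qed.
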